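(* Fix $T\ge1$, $M>0$, $c>0$ and $\alpha$ with $\zeta(\alpha)\le 2$ ($\alpha\ge\zeta^{-1}(2)\approx1.7286$, $\zeta$ the Riemann zeta function). Let $E=\{0,1,\dots,\lfloor\log_2\sqrt{2T-1}\rfloor\}$. For each $i\in E$, expert $e_i$ runs OGP on $C$ with step $\eta_i=\frac{\rho}{\varrho\sqrt M}2^i$, subgradients $x_t^*(i)\in\partial\varphi_t(x_t(i))$ and arbitrary predictions $\widehat x_t^*(i)\in H$ with $\|\widehat x_t^*(i)\|\le\varrho$, producing $x_t(i)\in C$. A meta-learner runs ONES over $E$ with $\theta=c/\sqrt M$ and $\widetilde w_1(i)=\beta(i+2)^{-\alpha}$, $\beta^{-1}=\sum_{i\in E}(i+2)^{-\alpha}$, loss vectors $\ell_t(i)=\langle g_t,x_t(i)\rangle$ with $g_t\in\partial\varphi_t(\overline x_t)$, $\overline x_t=\sum_{i\in E}w_t(i)x_t(i)$, and arbitrary prediction vectors $\widehat\ell_t$; assume $\|\ell_t\|_\infty\le\rho\varrho$ and $\|\widehat\ell_t\|_\infty\le\rho\varrho$ for all $t$. Define $$Q_T(j)=4+\varrho^{-2}\sum_{t=1}^{T-1}\|x_t^*(j)-\widehat x_t^*(j)\|^2,\quad L_T=4+\rho^{-2}\varrho^{-2}\sum_{t=1}^{T-1}\|\ell_t-\widehat\ell_t\|_\infty^2,\quad M_T=\max\{L_T,\max_{j\in E}Q_T(j)\},$$ and suppose $M_T\le M$. Then there is a constant $K$ depending only on $\rho,\varrho,\alpha,c$ such that for every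 $z_1,\dots,z_T\in C$, with $P_T=\sum_{t=2}^T\|z_t-z_{t-1}\|$, $$\sum_{t=1}^T\varphi_t(\overline x_t)-\varphi_t(z_t)\le K\sqrt{(1+P_T)M}.$$
   Context: $H$ real Hilbert space; $C\subset H$ nonempty closed convex with diameter $\rho=\sup_{x,y\in C}\|x-y\|\in(0,\infty)$; losses $\varphi_t$ convex with $C\subset\operatorname{dom}\partial\varphi_t$ and $\|g\|\le\varrho<\infty$ for all $g\in\partial\varphi_t(x)$, $x\in C$. OGP with step $\eta$: $\widetilde{x}_{t+1}=P_C(\widetilde{x}_t-\eta x_t^* )$, $x_{t+1}=P_C(\widetilde{x}_{t+1}-\eta\widehat{x}_{t+1}^* )$, $\widetilde x_1\in C$, $P_C$ the metric projection. ONES with step $\theta$: $\widetilde w_{t+1}=\mathscr N(\widetilde w_t\circ e^{-\theta\ell_t})$, $w_{t}=\mathscr N(\widetilde w_{t}\circ e^{-\theta\widehat\ell_{t}})$, $\mathscr N(u)=u/\|u\|_1$, $\circ$ the Hadamard product. *)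

(* Defs.v *)
From HB Require Import structures.
From mathcomp Require Import all_boot all_order all_algebra.
From mathcomp Require Import all_classical all_reals all_analysis.
Set Implicit Arguments. Unset Strict Implicit. Unset Printing Implicit Defensive.
Import Order.TTheory GRing.Theory Num.Theory.
Local Open Scope ring_scope.

Section Defs.
Variable R : realType.

Definition inner_product (V : lmodType R) (ip : V -> V -> R) : Prop :=
  [/\ (forall x y, ip x y = ip y x),
      (forall (a : R) x y z, ip (a *: x + y) z = a * ip x z + ip y z),
      (forall x, 0 <= ip x x) &
      (forall x, ip x x = 0 -> x = 0)].

Definition ipnorm (V : lmodType R) (ip : V -> V -> R) (x : V) : R :=
  Num.sqrt (ip x x).

Definition ip_converges (V : lmodType R) (ip : V -> V -> R)
  (u : nat -> V) (l : V) : Prop :=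
  forall e : R, 0 < e -> exists N, forall n, (N <= n)%N -> ipnorm ip (u n - l) < e.

Definition ip_complete (V : lmodType R) (ip : V -> V -> R) : Prop :=
  forall u : nat -> V,
    (forall e : R, 0 < e -> exists N, forall m n, (N <= m)%N -> (N <= n)%N ->
        ipnorm ip (u m - u n) < e) ->
    exists l, ip_converges ip u l.

Definition hilbert (V : lmodType R) (ip : V -> V -> R) : Prop :=
  inner_product ip /\ ip_complete ip.

Definition closed_set (V : lmodType R) (ip : V -> V -> R) (C : set V) : Prop :=
  forall (u : nat -> V) (l : V), (forall n, C (u n)) -> ip_converges ip u l -> C l.

Definition is_convex_set (V : lmodType R) (C : set V) : Prop :=
  forall x y (l : R), C x -> C y -> 0 <= l <= 1 -> C (l *: x + (1 - l) *: y).

Definition is_diameter (V : lmodType R) (ip : V -> V -> R) (C : set V) (rho : R) : Prop :=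
  (forall x y, C x -> C y -> ipnorm ip (x - y) <= rho) /\
  (forall e : R, 0 < e -> exists x y, [/\ C x, C y & rho - e < ipnorm ip (x - y)]).

Definition is_proj (V : lmodType R) (ip : V -> V -> R) (C : set V) (x p : V) : Prop :=
  C p /\ (forall y, C y -> ipnorm ip (x - p) <= ipnorm ip (x - y)).

Definition proper_convex (V : lmodType R) (phi : V -> \bar R) : Prop :=
  (forall x, phi x != -oo%E) /\ (exists x, phi x \is a fin_num) /\
  (forall x y (l : R), 0 < l < 1 ->
     (phi (l *: x + (1 - l) *: y)%R <= l%:E * phi x + (1 - l)%:E * phi y)%E).

Definition subgrad (V : lmodType R) (ip : V -> V -> R) (phi : V -> \bar R) (x g : V) : Prop :=
  phi x \is a fin_num /\ forall y, (phi x + (ip g (y - x)%R)%:E <= phi y)%E.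

Definition in_dom_subdiff (V : lmodType R) (ip : V -> V -> R) (phi : V -> \bar R) (x : V) : Prop :=
  exists g, subgrad ip phi x g.

(** Riemann zeta on the real axis via its Dirichlet series, sum_{k>=1} k^{-a}
    (an extended real, +oo when a <= 1). *)
Definition zeta_series (a : R) : \bar R :=
  (\sum_(1 <= k <oo) ((k%:R : R) `^ (- a))%:E)%E.

(** largest index of the expert grid: floor(log_2 sqrt(2T - 1)) *)
Definition Emax (T : nat) : nat :=
  Num.truncn (ln (Num.sqrt ((2 * T - 1)%:R : R)) / ln 2).

Definition normalize (n : nat) (u : 'I_n -> R) : 'I_n -> R :=
  fun i => u i / \sum_(j < n) `|u j|.

Definition supnorm (n : nat) (u : 'I_n -> R) : R := \big[Num.max/0]_(i < n) `|u i|.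

End Defs.

(* Main.v *)
Require Import Defs.
From HB Require Import structures.
From mathcomp Require Import all_boot all_order all_algebra.
From mathcomp Require Import all_classical all_reals all_analysis.
From mathcomp Require Import ring lra zify.
Import Order.TTheory GRing.Theory Num.Theory.
Local Open Scope ring_scope.

Module MA.
Set Implicit Arguments.

Section IP.
Variables (R : realType) (V : lmodType R) (ip : V -> V -> R).
Hypothesis hip : inner_product ip.

Lemma ipC x y : ip x y = ip y x.
Proof. by case: hip. Qed.

Lemma ip_lin a x y z : ip (a *: x + y) z = a * ip x z + ip y z.
Proof. by case: hip. Qed.

Lemma ipxx_ge0 x : 0 <= ip x x.
Proof. by case: hip. Qed.

Lemma ip_def x : ip x x = 0 -> x = 0.
Proof. by case: hip => _ _ _; apply. Qed.

Lemma ipDl x y z : ip (x + y) z = ip x z + ip y z.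
Proof. by have := ip_lin 1 x y z; rewrite scale1r mul1r. Qed.

Lemma ip0l z : ip 0 z = 0.
Proof. have := ipDl 0 0 z; rewrite addr0 => h; lra. Qed.

Lemma ipZl a x z : ip (a *: x) z = a * ip x z.
Proof. by have := ip_lin a x 0 z; rewrite addr0 ip0l addr0. Qed.

Lemma ipNl x z : ip (- x) z = - ip x z.
Proof. by rewrite -scaleN1r ipZl mulN1r. Qed.

Lemma ipDr x y z : ip z (x + y) = ip z x + ip z y.
Proof. by rewrite ipC ipDl !(ipC z). Qed.

Lemma ipZr a x z : ip z (a *: x) = a * ip z x.
Proof. by rewrite ipC ipZl ipC. Qed.

Lemma ipNr x z : ip z (- x) = - ip z x.
Proof. by rewrite ipC ipNl ipC. Qed.

Lemma ip0r z : ip z 0 = 0.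
Proof. by rewrite ipC ip0l. Qed.

Lemma ipsum_r I (r : seq I) (P : pred I) (F : I -> V) z :
  ip z (\sum_(i <- r | P i) F i) = \sum_(i <- r | P i) ip z (F i).
Proof.
elim/big_rec2: _ => [|i y1 y2 _ <-]; first by rewrite ip0r.
by rewrite ipDr.
Qed.

Lemma ipnorm_sqr x : ipnorm ip x ^+ 2 = ip x x.
Proof. by rewrite /ipnorm sqr_sqrtr // ipxx_ge0. Qed.

Lemma ipnorm_ge0 x : 0 <= ipnorm ip x.
Proof. exact: sqrtr_ge0. Qed.

Lemma CS x y : ip x y <= ipnorm ip x * ipnorm ip y.
Proof.
have A0 := ipxx_ge0 x; have B0 := ipxx_ge0 y.
have [B0'|Bpos] := eqVneq (ip y y) 0.
  by rewrite (ip_def B0') ip0r mulr_ge0 // ipnorm_ge0.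
have Bp : 0 < ip y y by rewrite lt_def Bpos B0.
set t := ip x y / ip y y.
have := ipxx_ge0 (x - t *: y).
rewrite !(ipDl, ipDr, ipNl, ipNr, ipZl, ipZr) (ipC y x) => H.
have H2 : ip x y ^+ 2 <= ip x x * ip y y.
  have -> : ip x y ^+ 2 = t * ip x y * ip y y by rewrite /t; field; rewrite Bpos.
  have e : t * ip x y = t * (t * ip y y) by rewrite /t; field; rewrite Bpos.
  rewrite e; rewrite e in H.
  have H' : 0 <= ip x x - t * (t * ip y y) by lra.
  have := mulr_ge0 H' B0; clearbody t; lra.
rewrite /ipnorm -sqrtrM //.
apply: (le_trans (ler_norm _)).
by rewrite -sqrtr_sqr ler_sqrt // ?mulr_ge0.
Qed.

Lemma ipnorm_tri x y : ipnorm ip (x + y) <= ipnorm ip x + ipnorm ip y.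
Proof.
have h := CS x y.
rewrite {1}/ipnorm -(@ger0_norm _ (_ + _)) ?addr_ge0 ?ipnorm_ge0 //.
rewrite -sqrtr_sqr ler_sqrt ?sqr_ge0 //.
rewrite !(ipDl, ipDr) sqrrD !ipnorm_sqr (ipC y x); lra.
Qed.

Lemma ipnorm_sub x y : ipnorm ip (x - y) = ipnorm ip (y - x).
Proof. by rewrite /ipnorm !(ipDl, ipDr, ipNl, ipNr) (ipC x y); congr Num.sqrt; lra. Qed.

End IP.

End MA.
Import MA.

Module MB.
Set Implicit Arguments.

Section Proj.
Variables (R : realType) (V : lmodType R) (ip : V -> V -> R).
Hypothesis hip : inner_product ip.
Variable C : set V.
Hypothesis Cconv : is_convex_set C.

Ltac ipexp := rewrite ?(ipDl hip, ipDr hip, ipNl hip, ipNr hip, ipZl hip, ipZr hip).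

Lemma proj_ineq x p y : is_proj ip C x p -> C y -> ip (x - p) (y - p) <= 0.
Proof.
move=> [Cp pmin] Cy.
rewrite leNgt; apply/negP => apos.
set a := ip (x - p) (y - p) in apos *.
set N := ip (y - p) (y - p).
have N0 : 0 <= N by apply: ipxx_ge0.
set lam := a / (a + N).
have aN : 0 < a + N by lra.
have lam0 : 0 < lam by rewrite divr_gt0.
have lam1 : lam <= 1 by rewrite ler_pdivrMr // mul1r; lra.
have := pmin _ (@Cconv y p lam Cy Cp (introT andP (conj (ltW lam0) lam1))).
rewrite /ipnorm ler_sqrt ?ipxx_ge0 // => H.
have H2 : 2 * lam * a <= lam ^+ 2 * N.
  move: H; rewrite /a /N; ipexp.
  have s1 := ipC hip x y; have s2 := ipC hip x p; have s3 := ipC hip y p.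
  clearbody lam; nra.
have H3 : lam * N <= a.
  by rewrite /lam mulrAC ler_pdivrMr //; nra.
nra.
Qed.

Lemma ogd_step (eta : R) Xt Xt' X g h z : 0 < eta -> C z ->
  is_proj ip C (Xt - eta *: h) X -> is_proj ip C (Xt - eta *: g) Xt' ->
  eta * ip g (X - z) <= eta ^+ 2 / 2 * ip (g - h) (g - h)
     + (ip (Xt - z) (Xt - z) - ip (Xt' - z) (Xt' - z)) / 2.
Proof.
move=> eta0 Cz pX pXt'.
have P1 := proj_ineq pXt' Cz.
have P2 := proj_ineq pX (proj1 pXt').
have P3 := ipxx_ge0 hip (eta *: (g - h) - (X - Xt')).
have P4 := ipxx_ge0 hip (Xt - X).
move: P1 P2 P3 P4; ipexp.
have := ipC hip; move=> s.
have s1 := s Xt Xt'; have s2 := s Xt X; have s3 := s Xt g; have s4 := s Xt h; have s5 := s Xt z.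
have s6 := s Xt' X; have s7 := s Xt' g; have s8 := s Xt' h; have s9 := s Xt' z.
have s10 := s X g; have s11 := s X h; have s12 := s X z.
have s13 := s g h; have s14 := s g z; have s15 := s h z.
clear s. nra.
Qed.
End Proj.

End MB.
Import MB.

Module MC.
Set Implicit Arguments.

Section OGD.
Variables (R : realType) (V : lmodType R) (ip : V -> V -> R).
Hypothesis hip : inner_product ip.
Variable C : set V.
Hypothesis Cconv : is_convex_set C.
Variable rho : R.
Hypothesis diam : forall u v, C u -> C v -> ipnorm ip (u - v) <= rho.

Lemma dyn_diff a z z' : C a -> C z -> C z' ->
  ip (a - z') (a - z') <= ip (a - z) (a - z) + 2 * rho * ipnorm ip (z' - z).
Proof.
move=> Ca Cz Cz'.
rewrite -!(ipnorm_sqr hip).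
have h1 := diam Ca Cz; have h2 := diam Ca Cz'.
have h3 : ipnorm ip (a - z') <= ipnorm ip (a - z) + ipnorm ip (z - z').
  by apply: le_trans (ipnorm_tri hip _ _); rewrite addrA subrK.
rewrite (ipnorm_sub hip z) in h3.
have h4 := @ipnorm_ge0 _ _ ip (a - z); have h5 := @ipnorm_ge0 _ _ ip (a - z'); have h6 := @ipnorm_ge0 _ _ ip (z' - z).
nra.
Qed.

Lemma ogd_regret (eta : R) T (Xt X gs hs z : nat -> V) : 0 < eta -> (1 <= T)%N ->
  (forall t, (1 <= t)%N -> is_proj ip C (Xt t - eta *: hs t) (X t)) ->
  (forall t, (1 <= t)%N -> is_proj ip C (Xt t - eta *: gs t) (Xt t.+1)) ->
  C (Xt 1%N) -> (forall t, (1 <= t <= T)%N -> C (z t)) ->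
  eta * \sum_(1 <= t < T.+1) ip (gs t) (X t - z t) <=
  eta ^+ 2 / 2 * \sum_(1 <= t < T.+1) ip (gs t - hs t) (gs t - hs t)
  + (rho ^+ 2 + 2 * rho * \sum_(1 <= t < T) ipnorm ip (z t.+1 - z t)) / 2.
Proof.
move=> eta0 T1 pX pXt C1 Cz.
suff : forall k, (k.+1 <= T)%N ->
  eta * \sum_(1 <= t < k.+2) ip (gs t) (X t - z t) <=
  eta ^+ 2 / 2 * \sum_(1 <= t < k.+2) ip (gs t - hs t) (gs t - hs t)
  + (rho ^+ 2 - ip (Xt k.+2 - z k.+1) (Xt k.+2 - z k.+1)
     + 2 * rho * \sum_(1 <= t < k.+1) ipnorm ip (z t.+1 - z t)) / 2.
  case: T T1 Cz => // T _ Cz /(_ T (leqnn _)) h.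
  apply: (le_trans h).
  have := ipxx_ge0 hip (Xt T.+2 - z T.+1); lra.
elim => [kT|k IH kT].
  rewrite !big_nat1 big_geq //.
  have Cz1 : C (z 1%N) by apply: Cz; rewrite kT.
  have h1 := @ogd_step _ _ _ hip _ Cconv eta _ _ _ _ _ _ eta0 Cz1 (pX 1%N (leqnn _)) (pXt 1%N (leqnn _)).
  have h2 := diam C1 Cz1.
  rewrite -[ip (Xt 1%N - z 1%N) _](ipnorm_sqr hip) in h1.
  have := @ipnorm_ge0 _ _ ip (Xt 1%N - z 1%N).
  nra.
have IH' := IH (ltnW kT).
rewrite (big_nat_recr k.+2 1 (fun t => ip (gs t) (X t - z t))) // (big_nat_recr k.+2 1 (fun t => ip (gs t - hs t) (gs t - hs t))) // (big_nat_recr k.+1 1 (fun t => ipnorm ip (z t.+1 - z t))) //=.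
have Czk1 : C (z k.+2) by apply: Cz; rewrite kT.
have Czk : C (z k.+1) by apply: Cz; apply/andP; split => //; exact: ltnW.
have h1 := @ogd_step _ _ _ hip _ Cconv eta _ _ _ _ _ _ eta0 Czk1 (pX k.+2 isT) (pXt k.+2 isT).
have h2 := dyn_diff (proj1 (pXt k.+1 isT)) Czk Czk1.
lra.
Qed.
End OGD.

End MC.
Import MC.

Module MD.
Set Implicit Arguments. Unset Strict Implicit.

Section Hedge.
Variable R : realType.

Lemma exp_bound (x : R) : expR x <= 1 + x + x ^+ 2 * expR `|x|.
Proof.
have h1 : expR x <= 1 + x * expR x.
  have h := expR_ge1Dx (- x).
  have e := expRxMexpNx_1 x.
  have := expR_gt0 x; nra.
have h2 := expR_ge1Dx x.
have e0 := expR_gt0 x.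
have [x0|x0] := leP 0 x.
  rewrite ger0_norm //; nra.
rewrite ltr0_norm //.
have := expR_ge1Dx (- x); nra.
Qed.


Lemma ln_le (x : R) : 0 < x -> ln x <= x - 1.
Proof.
move=> x0; have := @le_ln1Dx R (x - 1).
have -> : 1 + (x - 1) = x by ring.
by apply; lra.
Qed.

Lemma sum_gt0 N (u : 'I_N.+1 -> R) : (forall i, 0 < u i) -> 0 < \sum_i u i.
Proof.
move=> up; rewrite (bigD1 ord0) //=.
have : 0 <= \sum_(i < N.+1 | i != ord0) u i by apply: sumr_ge0 => i _; exact: ltW.
have := up ord0; lra.
Qed.

Lemma normalize_pos N (u : 'I_N.+1 -> R) : (forall i, 0 < u i) ->
  [/\ 0 < \sum_i u i, (forall i, normalize u i = u i / \sum_j u j),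
      (forall i, 0 < normalize u i) & \sum_i normalize u i = 1].
Proof.
move=> up.
have S0 := sum_gt0 up.
have nE : forall i, normalize u i = u i / \sum_j u j.
  by move=> i; rewrite /normalize; congr (_ / _); apply: eq_bigr => j _; rewrite gtr0_norm.
split => // [i|]; first by rewrite nE divr_gt0.
under eq_bigr do rewrite nE.
by rewrite -mulr_suml divff // gt_eqF.
Qed.

Lemma hedge_step N (wt a b : 'I_N.+1 -> R) (th D : R) : 0 < th ->
  (forall i, 0 < wt i) -> \sum_i wt i = 1 -> (forall i, `|a i - b i| <= D) ->
  th * (\sum_i normalize (fun i => wt i * expR (- th * b i)) i * a i)
    - th ^+ 2 * D ^+ 2 * expR (th * D)
  <= - ln (\sum_i wt i * expR (- th * a i)).
Proof.
move=> th0 wt0 wt1 abD.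
set u := fun i => wt i * expR (- th * b i).
have up : forall i, 0 < u i by move=> i; rewrite /u mulr_gt0 // expR_gt0.
have [Z0 nE npos nS] := normalize_pos up.
set Z := \sum_i u i in Z0 nE.
set w := normalize u in npos nS *.
have D0 : 0 <= D by apply: le_trans (abD ord0).
set U := \sum_i w i * expR (- th * (a i - b i)).
have U0 : 0 < U by apply: sum_gt0 => i; rewrite mulr_gt0 // expR_gt0.
have SE : \sum_i wt i * expR (- th * a i) = Z * U.
  rewrite /U big_distrr; apply: eq_bigr => i _; rewrite /w nE /u.
  have -> : expR (- th * a i) = expR (- th * b i) * expR (- th * (a i - b i)).
    by rewrite -expRD; congr expR; ring.
  by rewrite /=; field; rewrite gt_eqF.
rewrite SE lnM ?posrE //.
have hZ : ln Z + th * \sum_i w i * b i <= 0.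
  have H : \sum_i w i * (ln Z + th * b i) <= \sum_i (wt i - w i).
    apply: ler_sum => i _.
    have e1 : ln Z + th * b i = ln (Z * expR (th * b i)).
      by rewrite lnM ?posrE ?expR_gt0 // expRK.
    have e2 : w i * (Z * expR (th * b i)) = wt i.
      rewrite /w nE /u mulNr expRN; field; rewrite /= ?expR_eq0 ?gt_eqF //.
    rewrite e1.
    have := ln_le (mulr_gt0 Z0 (expR_gt0 (th * b i))).
    have := npos i; nra.
  move: H; rewrite sumrB nS wt1 subrr.
  under eq_bigr do rewrite mulrDr.
  rewrite big_split /= -mulr_suml nS mul1r.
  have -> : \sum_i w i * (th * b i) = th * \sum_i w i * b i.
    by rewrite mulr_sumr; apply: eq_bigr => i _; ring.
  by [].
have hU : ln U <= - th * \sum_i w i * (a i - b i) + th ^+ 2 * D ^+ 2 * expR (th * D).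
  apply: le_trans (ln_le U0) _.
  have H : \sum_i w i * (expR (- th * (a i - b i)) - 1)
       <= \sum_i w i * (- th * (a i - b i) + th ^+ 2 * D ^+ 2 * expR (th * D)).
    apply: ler_sum => i _; apply: ler_wpM2l; first exact: ltW.
    have := exp_bound (- th * (a i - b i)).
    have h1 : `|- th * (a i - b i)| <= th * D.
      by rewrite normrM normrN (gtr0_norm th0) ler_pM2l.
    have h2 : (- th * (a i - b i)) ^+ 2 <= th ^+ 2 * D ^+ 2.
      rewrite -(real_normK (num_real (- th * (a i - b i)))).
      have := normr_ge0 (- th * (a i - b i)); nra.
    have h3 : expR `|- th * (a i - b i)| <= expR (th * D) by rewrite ler_expR.
    have h4 := expR_gt0 `|- th * (a i - b i)|.
    have h5 : 0 <= (- th * (a i - b i)) ^+ 2 by apply: sqr_ge0.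
    nra.
  move: H; under eq_bigr do rewrite mulrBr mulr1.
  rewrite sumrB nS; under [X in _ <= X -> _]eq_bigr do rewrite mulrDr.
  rewrite big_split /= -mulr_suml nS mul1r.
  have -> : \sum_i w i * (- th * (a i - b i)) = - th * \sum_i w i * (a i - b i).
    by rewrite mulr_sumr; apply: eq_bigr => i _; ring.
  by [].
have Ea : \sum_i w i * a i = \sum_i w i * b i + \sum_i w i * (a i - b i).
  by rewrite -big_split; apply: eq_bigr => i _ /=; ring.
rewrite Ea; lra.
Qed.


Lemma hedge_regret N (wt w l lh : nat -> 'I_N.+1 -> R) (th : R) (D : nat -> R) T j :
  0 < th -> (forall i, 0 < wt 1%N i) -> \sum_i wt 1%N i = 1 ->
  (forall t, (1 <= t)%N -> wt t.+1 = normalize (fun i => wt t i * expR (- th * l t i))) ->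
  (forall t, (1 <= t)%N -> w t = normalize (fun i => wt t i * expR (- th * lh t i))) ->
  (forall t i, (1 <= t)%N -> `|l t i - lh t i| <= D t) ->
  th * \sum_(1 <= t < T.+1) (\sum_i w t i * l t i - l t j)
   <= - ln (wt 1%N j) + th ^+ 2 * \sum_(1 <= t < T.+1) D t ^+ 2 * expR (th * D t).
Proof.
move=> th0 w1p w1s Hwt Hw HD.
have inv : forall t, (1 <= t)%N -> (forall i, 0 < wt t i) /\ \sum_i wt t i = 1.
  elim => // -[_ _|t IH _]; first by split.
  have [p1 _] := IH isT.
  have [_ _ np ns] := normalize_pos (fun i => mulr_gt0 (p1 i) (expR_gt0 (- th * l t.+1 i))).
  by rewrite Hwt.
have step : forall t, (1 <= t)%N ->
    th * (\sum_i w t i * l t i - l t j) - th ^+ 2 * D t ^+ 2 * expR (th * D t)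
    <= ln (wt t.+1 j) - ln (wt t j).
  move=> t t1; have [p1 s1] := inv t t1.
  have hs := hedge_step (a := l t) (b := lh t) (D := D t) th0 p1 s1 (fun i => HD t i t1).
  rewrite -Hw // in hs.
  have up := fun i => mulr_gt0 (p1 i) (expR_gt0 (- th * l t i)).
  have [S0 nE _ _] := normalize_pos up.
  rewrite Hwt // nE ln_div ?posrE // lnM ?posrE ?expR_gt0 // expRK.
  move: hs; rewrite mulrBr mulr_sumr.
  lra.
suff : th * \sum_(1 <= t < T.+1) (\sum_i w t i * l t i - l t j)
   <= ln (wt T.+1 j) - ln (wt 1%N j) + th ^+ 2 * \sum_(1 <= t < T.+1) D t ^+ 2 * expR (th * D t).
  have [p1 s1] := inv T.+1 isT.
  have : wt T.+1 j <= 1.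
    rewrite -s1 (bigD1 j) //= lerDl; apply: sumr_ge0 => i _; exact: ltW.
  move=> /ln_le0; lra.
elim: T => [|T IH].
  by rewrite !big_geq // subrr mulr0 mulr0 addr0.
rewrite !(big_nat_recr T.+1 1) //=.
have := step T.+1 isT; lra.
Qed.

End Hedge.

End MD.
Import MD.

Module ME.
Set Implicit Arguments. Unset Strict Implicit.

Section Misc.
Variable R : realType.

Lemma pow2E n : (2 : R) ^+ n = expR (n%:R * ln 2).
Proof. by rewrite expRM_natl lnK // posrE. Qed.

Lemma Emax_prop T : (1 <= T)%N -> Num.sqrt ((2 * T - 1)%:R : R) < 2 ^+ (Emax R T).+1.
Proof.
move=> T1.
have x1 : (1 : R) <= (2 * T - 1)%:R by rewrite ler1n; lia.
have s0 : 0 < Num.sqrt ((2 * T - 1)%:R : R) by rewrite sqrtr_gt0; lra.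
have l2 : 0 < ln (2 : R) by apply: ln_gt0; lra.
rewrite pow2E /Emax.
set y := ln (Num.sqrt ((2 * T - 1)%:R : R)) / ln 2.
have := truncnS_gt y.
rewrite -(ltr_pM2r l2) => h.
rewrite -[X in X < _](lnK s0) ltr_expR.
apply: le_lt_trans h; rewrite /y mulfVK ?gt_eqF //.
Qed.

Lemma pick_j (s : R) n : 1 <= s -> s < 2 ^+ n.+1 ->
  exists j, [/\ (j <= n)%N, 2 ^+ j <= s & s < 2 ^+ j.+1].
Proof.
move=> s1; elim: n => [|n IH] h.
  by exists 0%N; rewrite expr0.
have [h2|h2] := ltP s (2 ^+ n.+1).
  by have [j [jn ? ?]] := IH h2; exists j; split => //; rewrite (leq_trans jn).
by exists n.+1.
Qed.

Lemma zeta_bound (alpha : R) n : (zeta_series alpha <= 2%:E)%E ->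
  \sum_(i < n) ((i.+2)%:R `^ (- alpha)) <= 1.
Proof.
move=> hz.
have h := @nneseries_lim_ge R (fun k => ((k%:R : R) `^ (- alpha))%:E) xpredT 1%N n.+2.
have := le_trans (h (fun k _ _ => powR_ge0 _ _)) hz.
rewrite sumEFin lee_fin big_ltn // powR1.
rewrite (_ : \sum_(2 <= i < n.+2) _ = \sum_(i < n) ((i.+2)%:R `^ (- alpha))) => [|]; first lra.
rewrite -{1}(add0n 2%N) big_addn (_ : (n.+2 - 2 = n)%N); last by lia.
by rewrite big_mkord; apply: eq_bigr => i _; rewrite addn2.
Qed.

End Misc.

End ME.
Import ME.

Module MF.
Set Implicit Arguments. Unset Strict Implicit.

Section Fin.
Variable R : realType.

Ltac pos := repeat first [assumption | apply: sqr_ge0 | apply: normr_ge0 | apply: mulr_ge0 | apply: addr_ge0 | apply: divr_ge0 | apply: ler01 | rewrite invr_ge0 | (apply: ltW; assumption)].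

Lemma subgrad_fine (V : lmodType R) (ip : V -> V -> R) (phi : V -> \bar R) x g y :
  subgrad ip phi x g -> phi y \is a fin_num ->
  fine (phi x) + ip g (y - x) <= fine (phi y).
Proof.
move=> [fx h] fy; move: (h y).
by rewrite -{1}(fineK fx) -(fineK fy) -EFinD lee_fin.
Qed.

Lemma final_arith (rho vrho alpha c E sM s p P Lw SD G MS ES th eta : R) :
  0 < rho -> 0 < vrho -> 0 < c -> 2 <= sM -> th = c / sM ->
  eta = rho * p / (vrho * sM) -> 0 < p -> p <= s -> s < 2 * p -> 1 <= s ->
  s ^+ 2 = 1 + 2 * P / rho -> 0 <= P -> 0 <= E ->
  th * MS <= Lw + th ^+ 2 * SD -> Lw <= `|alpha| * s ->
  SD <= E * rho ^+ 2 * vrho ^+ 2 * sM ^+ 2 ->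
  eta * ES <= eta ^+ 2 / 2 * G + (rho ^+ 2 + 2 * rho * P) / 2 ->
  G <= vrho ^+ 2 * sM ^+ 2 ->
  MS + ES <= Num.sqrt (1 + 2 / rho) *
     (`|alpha| / c + c * E * rho ^+ 2 * vrho ^+ 2 + 2 * rho * vrho)
     * Num.sqrt ((1 + P) * sM ^+ 2).
Proof.
move=> r0 v0 c0 sM2 thE etaE p0 ps sp s1 sE P0 E0 hM hL hSD hE hG.
have sM0 : 0 < sM by lra.
have th0 : 0 < th by rewrite thE divr_gt0.
have eta0 : 0 < eta by rewrite etaE divr_gt0 ?mulr_gt0.
have a0 := normr_ge0 alpha.
set K0 := `|alpha| / c + c * E * rho ^+ 2 * vrho ^+ 2 + 2 * rho * vrho.
have h1 : MS <= `|alpha| * s * sM / c + c * E * rho ^+ 2 * vrho ^+ 2 * sM * s.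
  rewrite -(ler_pM2l th0).
  have -> : th * (`|alpha| * s * sM / c + c * E * rho ^+ 2 * vrho ^+ 2 * sM * s)
     = `|alpha| * s + c ^+ 2 * E * rho ^+ 2 * vrho ^+ 2 * s.
    by rewrite thE; field; rewrite !gt_eqF.
  have e2 : th ^+ 2 * (E * rho ^+ 2 * vrho ^+ 2 * sM ^+ 2) = c ^+ 2 * E * rho ^+ 2 * vrho ^+ 2.
    by rewrite thE; field; rewrite !gt_eqF.
  have h3 : th ^+ 2 * SD <= c ^+ 2 * E * rho ^+ 2 * vrho ^+ 2.
    by rewrite -e2 ler_wpM2l // sqr_ge0.
  have h4 : 0 <= c ^+ 2 * E * rho ^+ 2 * vrho ^+ 2 by pos.
  nra.
have h2 : ES <= 3 / 2 * rho * vrho * sM * s.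
  rewrite -(ler_pM2l eta0).
  have -> : eta * (3 / 2 * rho * vrho * sM * s) = 3 / 2 * rho ^+ 2 * p * s.
    by rewrite etaE; field; rewrite !gt_eqF.
  have e2 : eta ^+ 2 / 2 * (vrho ^+ 2 * sM ^+ 2) = rho ^+ 2 * p ^+ 2 / 2.
    by rewrite etaE; field; rewrite !gt_eqF.
  have h3 : eta ^+ 2 / 2 * G <= rho ^+ 2 * p ^+ 2 / 2.
    by rewrite -e2 ler_wpM2l // divr_ge0 // sqr_ge0.
  have e3 : rho ^+ 2 + 2 * rho * P = rho ^+ 2 * s ^+ 2.
    by rewrite sE; field; rewrite gt_eqF.
  rewrite e3 in hE.
  have r2 : 0 < rho ^+ 2 by rewrite exprn_gt0.
  nra.
have h3 : MS + ES <= s * sM * K0.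
  rewrite /K0.
  have e : `|alpha| * s * sM / c = s * sM * (`|alpha| / c) by field; rewrite gt_eqF.
  have h4 : 0 <= c * E * rho ^+ 2 * vrho ^+ 2 by pos.
  have s0 : 0 < s by lra.
  have h5 : 0 <= rho * vrho * sM * s by pos.
  nra.
apply: le_trans h3 _.
have K00 : 0 <= K0.
  rewrite /K0; pos.
rewrite [X in _ <= X]mulrAC -sqrtrM; last by pos.
apply: ler_wpM2r => //.
have s0 : 0 < s by lra.
rewrite -(@ger0_norm _ (s * sM)); last by pos.
rewrite -sqrtr_sqr ler_sqrt; last by pos.
rewrite exprMn sE.
have hs : 1 + 2 * P / rho <= (1 + 2 / rho) * (1 + P).
  have -> : (1 + 2 / rho) * (1 + P) = 1 + 2 * P / rho + (P + 2 / rho) by field; rewrite gt_eqF.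
  by rewrite lerDl; pos.
have := sqr_ge0 sM; nra.
Qed.
End Fin.

End MF.
Import MF.

Unset Implicit Arguments. Set Strict Implicit.

Lemma ipnormN (R : realType) (V : lmodType R) (ip : V -> V -> R) :
  inner_product ip -> forall u, ipnorm ip (- u) = ipnorm ip u.
Proof. by move=> hip u; rewrite /ipnorm (ipNl hip) (ipNr hip) opprK. Qed.

Theorem theorem1 (R : realType) (rho vrho alpha c : R) :
  0 < rho -> 0 < vrho -> 0 < c -> (zeta_series alpha <= 2%:E)%E ->
  exists K : R,
  forall (V : lmodType R) (ip : V -> V -> R) (C : set V)
    (phi : nat -> V -> \bar R) (T : nat) (M : R)
    (x xt xs xh : 'I_(Emax R T).+1 -> nat -> V)
    (g : nat -> V) (l lh wt w : nat -> 'I_(Emax R T).+1 -> R),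
  (* setting *)
  hilbert ip -> (exists x0, C x0) -> closed_set ip C -> is_convex_set C ->
  is_diameter ip C rho ->
  (forall t, proper_convex (phi t)) ->
  (forall t y, C y -> in_dom_subdiff ip (phi t) y) ->
  (forall t y gy, C y -> subgrad ip (phi t) y gy -> ipnorm ip gy <= vrho) ->
  (1 <= T)%N -> 0 < M ->
  (* experts: OGP with step eta_i = rho / (vrho sqrt M) 2^i *)
  let eta (i : 'I_(Emax R T).+1) : R := rho / (vrho * Num.sqrt M) * 2 ^+ i in
  (forall i, C (xt i 1%N)) ->
  (forall i t, (1 <= t)%N -> is_proj ip C (xt i t - eta i *: xh i t) (x i t)) ->
  (forall i t, (1 <= t)%N -> is_proj ip C (xt i t - eta i *: xs i t) (xt i t.+1)) ->
  (forall i t, (1 <= t)%N -> subgrad ip (phi t) (x i t) (xs i t)) ->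
  (forall i t, (1 <= t)%N -> ipnorm ip (xh i t) <= vrho) ->
  (* meta-learner: ONES with theta = c / sqrt M *)
  let theta : R := c / Num.sqrt M in
  let xbar (t : nat) : V := \sum_(i < (Emax R T).+1) w t i *: x i t in
  (forall i : 'I_(Emax R T).+1,
     wt 1%N i = ((i.+2)%:R `^ (- alpha)) / \sum_(j < (Emax R T).+1) ((j.+2)%:R `^ (- alpha))) ->
  (forall t, (1 <= t)%N -> wt t.+1 = normalize (fun i => wt t i * expR (- theta * l t i))) ->
  (forall t, (1 <= t)%N -> w t = normalize (fun i => wt t i * expR (- theta * lh t i))) ->
  (forall t, (1 <= t)%N -> subgrad ip (phi t) (xbar t) (g t)) ->
  (forall t i, (1 <= t)%N -> l t i = ip (g t) (x i t)) ->
  (forall t, (1 <= t)%N -> supnorm (l t) <= rho * vrho) ->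
  (forall t, (1 <= t)%N -> supnorm (lh t) <= rho * vrho) ->
  (* M_T <= M *)
  let Q (j : 'I_(Emax R T).+1) : R :=
    4 + vrho ^- 2 * \sum_(1 <= t < T) ipnorm ip (xs j t - xh j t) ^+ 2 in
  let L : R :=
    4 + rho ^- 2 * vrho ^- 2 * \sum_(1 <= t < T) supnorm (fun i => l t i - lh t i) ^+ 2 in
  Num.max L (\big[Num.max/0]_(j < (Emax R T).+1) Q j) <= M ->
  (* regret against any comparator sequence in C *)
  forall z : nat -> V, (forall t, (1 <= t <= T)%N -> C (z t)) ->
  let P : R := \sum_(2 <= t < T.+1) ipnorm ip (z t - z t.-1) in
  \sum_(1 <= t < T.+1) (fine (phi t (xbar t)) - fine (phi t (z t)))
    <= K * Num.sqrt ((1 + P) * M).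
Proof.
move=> r0 v0 c0 hzeta.
set E := expR (c * rho * vrho).
exists (Num.sqrt (1 + 2 / rho) * (`|alpha| / c + c * E * rho ^+ 2 * vrho ^+ 2 + 2 * rho * vrho)).
move=> V ip C phi T M x xt xs xh g l lh wt w [hip _] _ _ Cconv [diam _] _ hdom hgb T1 M0
  eta xt1 hx hxt hxs hxh theta xbar hwt1 hwt hw hg hl hlb hlhb Q L hMT z hz.
cbv zeta; set P := (\sum_(2 <= t < T.+1) _).
set n := Emax R T.
have rv0 : 0 < rho * vrho by rewrite mulr_gt0.
move: hMT; rewrite ge_max => /andP[LM QM].
have QjM : forall j, Q j <= M.
  by move=> j; apply: le_trans QM; apply: le_bigmax.
set sM := Num.sqrt M.
have MsM : M = sM ^+ 2 by rewrite /sM sqr_sqrtr // ltW.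
set Dt := fun t => supnorm (fun i => l t i - lh t i).
have L4 : 4 <= L.
  rewrite /L lerDl; apply: mulr_ge0; first by apply: mulr_ge0; rewrite invr_ge0 sqr_ge0.
  by apply: sumr_ge0 => t _; apply: sqr_ge0.
have sM2 : 2 <= sM.
  have -> : (2 : R) = Num.sqrt 4.
    have -> : (4 : R) = 2 ^+ 2 by rewrite expr2; lra.
    by rewrite sqrtr_sqr ger0_norm.
  rewrite ler_sqrt; lra.
have sM0 : 0 < sM by lra.
have th0 : 0 < theta by rewrite /theta divr_gt0.
have hD : forall t i, (1 <= t)%N -> `|l t i - lh t i| <= Dt t.
  by move=> t i _; rewrite /Dt /supnorm; apply: (le_bigmax _ (fun i => `|l t i - lh t i|)).
have Dbnd : forall t, (1 <= t)%N -> 0 <= Dt t <= 2 * (rho * vrho).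
  move=> t t1; apply/andP; split.
    by apply: le_trans (hD t ord0 t1).
  rewrite /Dt /supnorm; apply: bigmax_le; first by rewrite mulr_ge0 // ltW.
  move=> i _; apply: le_trans (ler_normB _ _) _.
  have h1 : `|l t i| <= rho * vrho.
    by apply: le_trans (hlb t t1); apply: (le_bigmax _ (fun i => `|l t i|)).
  have h2 : `|lh t i| <= rho * vrho.
    by apply: le_trans (hlhb t t1); apply: (le_bigmax _ (fun i => `|lh t i|)).
  clear -h1 h2; lra.
set pw := fun i : 'I_n.+1 => ((i.+2)%:R : R) `^ (- alpha).
have pw0 : forall i, 0 < pw i by move=> i; rewrite /pw powR_gt0 // ltr0n.
have Spw0 : 0 < \sum_i pw i by apply: sum_gt0.
have w1p : forall i, 0 < wt 1%N i by move=> i; rewrite hwt1 divr_gt0.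
have w1s : \sum_i wt 1%N i = 1.
  under eq_bigr do rewrite hwt1.
  by rewrite -mulr_suml divff // gt_eqF.
have P0 : 0 <= P by apply: sumr_ge0 => t _; apply: ipnorm_ge0.
have PT : P <= rho * (T.-1)%:R.
  apply: le_trans (_ : \sum_(2 <= t < T.+1) rho <= _).
    apply: ler_sum_nat => t /andP[t2 tT]; apply: diam; apply: hz.
      by rewrite (leq_trans _ t2) //= -ltnS.
    case: t t2 tT => [|[|t]] // _ /= tT; rewrite ltnW //.
  by rewrite sumr_const_nat mulr_natr subSS subn1.
set s := Num.sqrt (1 + 2 * P / rho).
have hP : 0 <= 2 * P / rho by apply: divr_ge0; [apply: mulr_ge0 | apply: ltW].
have hP1 : 0 <= 1 + 2 * P / rho by apply: addr_ge0.
have s1 : 1 <= s by rewrite -sqrtr1 ler_sqrt // lerDl.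
have sE : s ^+ 2 = 1 + 2 * P / rho by rewrite /s sqr_sqrtr.
have s2 : s < 2 ^+ n.+1.
  apply: le_lt_trans (Emax_prop R T1).
  rewrite ler_sqrt ?ler0n // (_ : (2 * T - 1 = (2 * T.-1).+1)%N); last first.
    by case: (T) T1 => // k _; rewrite mulnS.
  rewrite -[(2 * T.-1).+1]addn1 natrD natrM.
  have : 2 * P / rho <= 2 * (T.-1)%:R.
    rewrite ler_pdivrMr //; clear -PT r0; clearbody P; nra.
  move=> q; clear -q; lra.
have [j0 [j0n pj sj]] := pick_j s1 s2.
have j0lt : (j0 < n.+1)%N by rewrite ltnS.
set j := Ordinal j0lt.
have step : forall t, (1 <= t <= T)%N ->
    fine (phi t (xbar t)) - fine (phi t (z t))
    <= (\sum_i w t i * l t i - l t j) + ip (xs j t) (x j t - z t).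
  move=> t /andP[t1 tT].
  have fx := (hxs j t t1).1.
  have [gz hgz] := hdom t (z t) (hz t (introT andP (conj t1 tT))).
  have h1 := subgrad_fine (hg t t1) fx.
  have h2 := subgrad_fine (hxs j t t1) hgz.1.
  have e1 : ip (g t) (x j t - xbar t) = l t j - \sum_i w t i * l t i.
    rewrite (ipDr hip) (ipNr hip) /xbar (ipsum_r hip) (hl t j t1); congr (_ - _).
    by apply: eq_bigr => i _; rewrite (ipZr hip) hl.
  have e2 : ip (xs j t) (z t - x j t) = - ip (xs j t) (x j t - z t).
    by rewrite !(ipDr hip) !(ipNr hip) opprD opprK addrC.
  rewrite e1 in h1; rewrite e2 in h2; clear -h1 h2; lra.
have hsum : \sum_(1 <= t < T.+1) (fine (phi t (xbar t)) - fine (phi t (z t)))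
   <= \sum_(1 <= t < T.+1) (\sum_i w t i * l t i - l t j)
      + \sum_(1 <= t < T.+1) ip (xs j t) (x j t - z t).
  by rewrite -big_split; apply: ler_sum_nat => t ht; apply: step.
have hm := hedge_regret T j th0 w1p w1s hwt hw hD.
have hLw : - ln (wt 1%N j) <= `|alpha| * s.
  rewrite hwt1 ln_div ?posrE // /pw ln_powR.
  have hS := ln_le0 (zeta_bound (n.+1) hzeta).
  have lj0 : 0 <= ln ((j.+2)%:R : R) by apply: ln_ge0; rewrite ler1n.
  have lj : ln ((j.+2)%:R : R) <= s.
    apply: le_trans (ln_le _) _; first by rewrite ltr0n.
    apply: le_trans pj; rewrite -natr1 addrK -natrX ler_nat.
    exact: ltn_expl.
  have := ler_norm alpha; have := ler_normr alpha; have := normr_ge0 alpha.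
  move=> a1 a2 a3; clear -hS lj0 lj a1 a2 a3; nra.
have E0 : 0 <= E by apply: expR_ge0.
have hSD : \sum_(1 <= t < T.+1) Dt t ^+ 2 * expR (theta * Dt t)
     <= E * rho ^+ 2 * vrho ^+ 2 * sM ^+ 2.
  apply: le_trans (_ : E * \sum_(1 <= t < T.+1) Dt t ^+ 2 <= _).
    rewrite mulr_sumr; apply: ler_sum_nat => t /andP[t1 _].
    have /andP[D0 D1] := Dbnd t t1.
    rewrite mulrC; apply: ler_wpM2r; first exact: sqr_ge0.
    rewrite /E ler_expR /theta.
    have : c / sM * Dt t <= c / sM * (2 * (rho * vrho)).
      by apply: ler_wpM2l => //; apply: divr_ge0; [apply: ltW|apply: ltW].
    have : c / sM * (2 * (rho * vrho)) <= c * rho * vrho.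
      have -> : c / sM * (2 * (rho * vrho)) = (c * rho * vrho) * (2 / sM).
        by field; rewrite gt_eqF.
      have h2 : 2 / sM <= 1 by rewrite ler_pdivrMr // mul1r.
      have h3 : 0 <= c * rho * vrho by apply: mulr_ge0; [apply: mulr_ge0|]; apply: ltW.
      clear -h2 h3; nra.
    move=> q1 q2; clear -q1 q2; lra.
  rewrite -mulrA -mulrA; apply: ler_wpM2l => //.
  rewrite (big_nat_recr T 1) //=.
  have eL : \sum_(1 <= t < T) Dt t ^+ 2 = (L - 4) * (rho ^+ 2 * vrho ^+ 2).
    by rewrite /L /Dt; field; rewrite !gt_eqF.
  have /andP[D0 D1] := Dbnd T T1.
  rewrite eL -MsM.
  have r2 : 0 < rho ^+ 2 * vrho ^+ 2 by rewrite mulr_gt0 // exprn_gt0.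
  have : Dt T ^+ 2 <= 4 * (rho ^+ 2 * vrho ^+ 2).
    have -> : 4 * (rho ^+ 2 * vrho ^+ 2) = (2 * (rho * vrho)) ^+ 2 by ring.
    clear -D0 D1; nra.
  move=> hDT; clear -hDT r2 LM; clearbody L; nra.
have etaj0 : 0 < eta j.
  by rewrite /eta mulr_gt0 // ?exprn_gt0 // divr_gt0 // mulr_gt0.
have he := @ogd_regret R V ip hip C Cconv rho diam (eta j) T (xt j) (x j) (xs j) (xh j) z
  etaj0 T1 (hx j) (hxt j) (xt1 j) hz.
have eP : \sum_(1 <= t < T) ipnorm ip (z t.+1 - z t) = P.
  by rewrite /P [RHS]big_add1.
rewrite eP in he.
have hG : \sum_(1 <= t < T.+1) ip (xs j t - xh j t) (xs j t - xh j t) <= vrho ^+ 2 * sM ^+ 2.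
  rewrite (big_nat_recr T 1) //= -MsM.
  have eQ : \sum_(1 <= t < T) ip (xs j t - xh j t) (xs j t - xh j t) = (Q j - 4) * vrho ^+ 2.
    rewrite /Q; under eq_bigr do rewrite -(ipnorm_sqr hip).
    by field; rewrite gt_eqF.
  have hxsT : ipnorm ip (xs j T) <= vrho := hgb T (x j T) (xs j T) (proj1 (hx j T T1)) (hxs j T T1).
  have hxhT := hxh j T T1.
  have hn : ipnorm ip (xs j T - xh j T) <= 2 * vrho.
    apply: le_trans (ipnorm_tri hip _ _) _; rewrite (ipnormN _ _ _ hip); clear -hxsT hxhT; lra.
  have hn0 := @ipnorm_ge0 _ _ ip (xs j T - xh j T).
  rewrite eQ -(ipnorm_sqr hip).
  have hQ := QjM j; have v2 : 0 < vrho ^+ 2 by rewrite exprn_gt0.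
  clear -hQ v2 hn hn0 v0; clearbody Q; nra.
apply: le_trans hsum _.
rewrite MsM.
have p0 : 0 < (2 : R) ^+ j by rewrite exprn_gt0.
apply: (final_arith r0 v0 c0 sM2 (erefl _) _ p0 pj _ s1 sE P0 E0 hm hLw hSD he hG).
  by rewrite /eta mulrAC.
by rewrite -exprS.
Qed.
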